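(* Let $d\ge1$. Let $G_A=(V_A,E_A)$ with configuration $\mathbf{p}^A$ and $G_B=(V_B,E_B)$ with configuration $\mathbf{p}^B$ be frameworks in general position in $\mathbb{R}^d$, with $V_C=V_A\cap V_B$ a proper subset of both $V_A$ and $V_B$, $n=|V_C|\ge d+1$, and $\mathbf{p}^A_i=\mathbf{p}^B_i$ for $i\in V_C$. Let $\Omega_A$ (indexed by $V_A$) and $\Omega_B$ (indexed by $V_B$) be positive semidefinite stress matrices of nullity $d+1$ of $G_A(\mathbf{p}^A)$ and $G_B(\mathbf{p}^B)$ respectively. Let $V=V_A\cup V_B$ and let $\widetilde\Omega_A$, $\widetilde\Omega_B$ be the $V\times V$ matrices obtained by extending $\Omega_A$, $\Omega_B$ by zeros, i.e. $(\widetilde\Omega_A)_{ij}=(\Omega_A)_{ij}$ if $i,j\in V_A$ and $0$ otherwise, and similarly for $B$. Then $\widetilde\Omega=\widetilde\Omega_A+\widetilde\Omega_B$ is a positive semidefinite stress matrix of nullity $d+1$ of the framework attachment, i.e. of the framework with graph $(V,E_A\cup E_B)$ and configuration $\mathbf{p}$ where $\mathbf{p}_i=\mathbf{p}^A_i$ for $i\in V_A$, $\mathbf{p}_i=\mathbf{p}^B_i$ for $i\in V_B$.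
   Context: A framework $G(\mathbf{p})$ in $\mathbb{R}^d$ is a finite graph $G=(V,E)$ with points $\mathbf{p}_i\in\mathbb{R}^d$; it is in general position if any $d+1$ distinct vertices have affinely independent points. A stress matrix of $G(\mathbf{p})$ is a real $|V|\times|V|$ matrix $\Omega$ with: $\Omega_{ij}=\Omega_{ji}$; $\Omega_{ij}=0$ whenever $i\ne j$ and $\{i,j\}\notin E$; $\sum_{j}\Omega_{ij}=0$ for all $i$; $\sum_j\Omega_{ij}\mathbf{p}_j=0$ for all $i$. Its nullity is $\dim\ker\Omega$. *)

(* Defs.v *)
From HB Require Import structures.
From mathcomp Require Import all_boot all_order all_algebra.
From mathcomp Require Import reals.
Set Implicit Arguments. Unset Strict Implicit. Unset Printing Implicit Defensive.
Import Order.TTheory GRing.Theory Num.Theory.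
Local Open Scope ring_scope.

Definition vtx (T : finType) (V : {set T}) : finType := {x : T | x \in V}.

(* General position of a configuration p (points in R^d) on the vertex set V:
   any d+1 distinct vertices have affinely independent points, i.e. the lifted
   vectors (p_i, 1) in R^(d+1) are linearly independent. *)
Definition general_position (R : realType) (d : nat) (T : finType)
    (V : {set T}) (p : T -> 'rV[R]_d) : Prop :=
  forall f : 'I_d.+1 -> T, injective f -> (forall k, f k \in V) ->
    row_free (\matrix_(k < d.+1) row_mx (p (f k)) (1 : 'rV[R]_1)).

Definition is_stress (R : realType) (d : nat) (T : finType) (V : {set T})
    (E : {set {set T}}) (p : T -> 'rV[R]_d) (Om : vtx V -> vtx V -> R) : Prop :=
  [/\ forall i j, Om i j = Om j i,
      forall i j, i != j -> [set val i; val j] \notin E -> Om i j = 0,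
      forall i, \sum_j Om i j = 0
    & forall i, \sum_j Om i j *: p (val j) = 0].

Definition psd (R : realType) (I : finType) (Om : I -> I -> R) : Prop :=
  forall x : I -> R, 0 <= \sum_i \sum_j x i * Om i j * x j.

Definition to_mx (R : realType) (I : finType) (Om : I -> I -> R)
  : 'M[R]_#|I| := \matrix_(i, j) Om (enum_val i) (enum_val j).

Definition nullity (R : realType) (I : finType) (Om : I -> I -> R) : nat :=
  \rank (kermx (to_mx Om)^T).

Definition ext0 (R : realType) (T : finType) (V : {set T})
    (Om : vtx V -> vtx V -> R) (i j : T) : R :=
  match @insub T (fun x => x \in V) (vtx V) i,
        @insub T (fun x => x \in V) (vtx V) j with
  | Some a, Some b => Om a b
  | _, _ => 0
  end.

(* Main.v *)
Require Import Defs.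
From HB Require Import structures.
From mathcomp Require Import all_boot all_order all_algebra.
From mathcomp Require Import reals.
From mathcomp Require Import ring lra.
From Stdlib Require FunctionalExtensionality.
Import Order.TTheory GRing.Theory Num.Theory.
Set Implicit Arguments. Unset Strict Implicit. Unset Printing Implicit Defensive.
Local Open Scope ring_scope.
Section Lin.
Variables (R : realType) (I : finType).
Implicit Types (Om : I -> I -> R) (x : I -> R).
Definition in_ker Om x := forall i, \sum_j Om i j * x j = 0.

Definition fv (u : 'rV[R]_#|I|) : I -> R := fun i => u 0 (enum_rank i).
Definition affv n (q : I -> 'rV[R]_n) x :=
  exists c : 'cV[R]_n, forall i, x i = (q i *m c) 0 0.
Definition Pm n (q : I -> 'rV[R]_n) : 'M[R]_(#|I|, n) := \matrix_k q (enum_val k).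
Arguments Pm {n}. Arguments affv {n}.

Lemma sum_reidx (F : I -> R) : \sum_j F j = \sum_(l < #|I|) F (enum_val l).
Proof. by rewrite (reindex (@enum_val I I)) //; exact/onW_bij/(@enum_val_bij I). Qed.

Lemma T1 Om u : (u <= kermx (to_mx Om)^T)%MS <-> in_ker Om (fv u).
Proof.
rewrite sub_kermx; split.
  move=> /eqP/rowP H i; have := H (enum_rank i); rewrite [RHS]mxE => H1; apply: eq_trans H1.
  rewrite !mxE sum_reidx.
  by apply: eq_bigr => l _; rewrite !mxE /fv enum_rankK enum_valK mulrC.
move=> H; apply/eqP/rowP => k; rewrite [RHS]mxE.
apply: eq_trans (H (enum_val k)); rewrite sum_reidx.
rewrite mxE; by apply: eq_bigr => l _; rewrite !mxE /fv enum_valK mulrC.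
Qed.

Lemma T2 n (q : I -> 'rV[R]_n) (u : 'rV[R]_#|I|) : (u <= (Pm q)^T)%MS <-> affv q (fv u).
Proof.
split.
  move=> /submxP [D ->]; exists D^T => i; rewrite /fv !mxE.
  by apply: eq_bigr => k _; rewrite !mxE enum_rankK mulrC.
move=> [c Hc]; apply/submxP; exists c^T; apply/rowP => l.
have := Hc (enum_val l); rewrite /fv enum_valK => ->; rewrite !mxE.
by apply: eq_bigr => k _; rewrite !mxE mulrC.
Qed.

Lemma fv_row x : fv (\row_l x (enum_val l)) = x.
Proof. by apply: FunctionalExtensionality.functional_extensionality => i; rewrite /fv mxE enum_rankK. Qed.

Lemma nullity_char Om n (q : I -> 'rV[R]_n) r :
  (forall x, in_ker Om x <-> affv q x) -> \rank (Pm q) = r -> nullity Om = r.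
Proof.
move=> H <-; rewrite /nullity -[\rank (Pm q)]mxrank_tr; apply/eqP; rewrite eqn_leq.
apply/andP; split; apply: mxrankS; apply/row_subP => k.
  by apply/T2/H/T1; rewrite row_sub.
by apply/T1/H/T2; rewrite row_sub.
Qed.

Lemma ker_char Om n (q : I -> 'rV[R]_n) r :
  (forall x, affv q x -> in_ker Om x) -> \rank (Pm q) = r -> nullity Om = r ->
  forall x, in_ker Om x -> affv q x.
Proof.
move=> H Hr Hn.
have S1 : ((Pm q)^T <= kermx (to_mx Om)^T)%MS.
  by apply/row_subP => k; apply/T1/H/T2; rewrite row_sub.
have S2 : (kermx (to_mx Om)^T <= (Pm q)^T)%MS.
  rewrite -(mxrank_leqif_sup S1).2 mxrank_tr Hr -Hn.
  by [].
move=> x Hx; rewrite -(fv_row x); apply/T2; apply: submx_trans S2.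
by apply/T1; rewrite fv_row.
Qed.

Definition bil Om (u w : I -> R) := \sum_i \sum_j u i * Om i j * w j.

Lemma bil_sym Om u w : (forall i j, Om i j = Om j i) -> bil Om u w = bil Om w u.
Proof.
move=> S; rewrite /bil exchange_big; apply: eq_bigr => i _; apply: eq_bigr => j _.
by rewrite (S j i); ring.
Qed.

Lemma bil_r Om u w : bil Om u w = \sum_i u i * \sum_j Om i j * w j.
Proof. by apply: eq_bigr => i _; rewrite mulr_sumr; apply: eq_bigr => j _; rewrite mulrA. Qed.

Lemma bil_expand Om x y t :
  bil Om (fun i => x i + t * y i) (fun i => x i + t * y i) =
  bil Om x x + t * (bil Om x y + bil Om y x) + t ^+ 2 * bil Om y y.
Proof.
rewrite /bil mulrDr !mulr_sumr -!big_split /=; apply: eq_bigr => i _.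
rewrite !mulr_sumr -!big_split /=; apply: eq_bigr => j _; ring.
Qed.

Lemma quad_root (a c : R) : 0 <= a -> 0 <= c -> (forall t, 0 <= t * (a + a) + t ^+ 2 * c) -> a = 0.
Proof.
move=> a0 c0 H; have s0 : 0 < c + 1 by lra.
have := H (- a / (c + 1)).
have -> : - a / (c + 1) * (a + a) + (- a / (c + 1)) ^+ 2 * c =
          - (a * a * (c + 2)) / ((c + 1) ^+ 2).
  by field; lra.
rewrite pmulr_lge0 ?invr_gt0 ?exprn_gt0 // oppr_ge0 => H2.
have : a * a <= 0 by nra.
nra.
Qed.

Lemma psd_ker Om x : (forall i j, Om i j = Om j i) -> psd Om -> bil Om x x = 0 -> in_ker Om x.
Proof.
move=> S P q0.
pose v i := \sum_j Om i j * x j.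
have av : bil Om v x = \sum_i v i ^+ 2 by rewrite bil_r; apply: eq_bigr => i _; rewrite expr2.
have a0 : 0 <= bil Om v x by rewrite av; apply: sumr_ge0 => i _; exact: sqr_ge0.
have : bil Om v x = 0.
  have P2 : 0 <= bil Om v v := P v. apply: (quad_root a0 P2) => t.
  have P3 : 0 <= bil Om (fun i => x i + t * v i) (fun i => x i + t * v i) := P _. move: P3.
  by rewrite bil_expand q0 add0r (bil_sym _ _ S).
rewrite av => /eqP; rewrite psumr_eq0 => [/allP H i|i _]; last exact: sqr_ge0.
by apply/eqP; rewrite -sqrf_eq0; apply: H; rewrite mem_index_enum.
Qed.

Lemma ker_bil Om x : in_ker Om x -> bil Om x x = 0.
Proof. by move=> H; rewrite bil_r big1 // => i _; rewrite H mulr0. Qed.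
End Lin.
Section TL.
Variables (R : realType) (T : finType).

Lemma sum_vtx (M : nmodType) (V : {set T}) (G : T -> M) :
  \sum_(j : vtx V) G (val j) = \sum_(t in V) G t.
Proof. have := big_sub V G. move=> ->. reflexivity. Qed.

Lemma ext0E (V : {set T}) (Om : vtx V -> vtx V -> R) a b : ext0 Om (val a) (val b) = Om a b.
Proof. by rewrite /ext0 !valK. Qed.

Lemma ext0_outr (V : {set T}) (Om : vtx V -> vtx V -> R) t s : s \notin V -> ext0 Om t s = 0.
Proof.
move=> sV; rewrite /ext0.
have -> : @insub T (fun x => x \in V) (vtx V) s = None by apply: insubF; apply: negbTE.
by case: insub.
Qed.

Lemma ext0_outl (V : {set T}) (Om : vtx V -> vtx V -> R) t s : t \notin V -> ext0 Om t s = 0.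
Proof.
move=> tV; rewrite /ext0.
by have -> : @insub T (fun x => x \in V) (vtx V) t = None by apply: insubF; apply: negbTE.
Qed.

Lemma sum_sub (M : nmodType) (V W : {set T}) (G : T -> M) : V \subset W ->
  (forall s, s \notin V -> G s = 0) ->
  \sum_(j : vtx W) G (val j) = \sum_(b : vtx V) G (val b).
Proof.
move=> sub G0; rewrite !sum_vtx [LHS]big_mkcond [RHS]big_mkcond; apply: eq_bigr => t _.
case tV: (t \in V); first by rewrite (subsetP sub _ tV).
by case: (t \in W); rewrite // G0 ?tV.
Qed.

Lemma ext0_sym (V : {set T}) (Om : vtx V -> vtx V -> R) t s :
  (forall a b, Om a b = Om b a) -> ext0 Om t s = ext0 Om s t.
Proof. by move=> S; rewrite /ext0; case: insub => [a|]; case: insub => [b|]. Qed.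

Lemma vtx_ex (V : {set T}) t : t \in V -> exists a : vtx V, t = val a.
Proof. by move=> tV; exists (exist _ t tV). Qed.
Arguments vtx_ex {V t}.

Lemma bil_ext0 (V W : {set T}) (Om : vtx V -> vtx V -> R) (X : T -> R) : V \subset W ->
  \sum_(i : vtx W) \sum_(j : vtx W) X (val i) * ext0 Om (val i) (val j) * X (val j) =
  \sum_(a : vtx V) \sum_(b : vtx V) X (val a) * Om a b * X (val b).
Proof.
move=> sub.
rewrite (sum_sub (G := fun t => \sum_(j : vtx W) X t * ext0 Om t (val j) * X (val j)) sub) //; last first.
  by move=> s sV; apply: big1 => j _; rewrite ext0_outl // mulr0 mul0r.
apply: eq_bigr => a _.
rewrite (sum_sub (G := fun s => X (val a) * ext0 Om (val a) s * X s) sub) //; last first.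
  by move=> s sV; rewrite ext0_outr // mulr0 mul0r.
by apply: eq_bigr => b _; rewrite ext0E.
Qed.

Lemma rowsum_ext0 (M : nmodType) (V W : {set T}) (Om : vtx V -> vtx V -> R)
   (F : R -> T -> M) (t : T) : V \subset W -> (forall s, F 0 s = 0) ->
  \sum_(j : vtx W) F (ext0 Om t (val j)) (val j) =
  if t \in V then \sum_(b : vtx V) F (ext0 Om t (val b)) (val b) else 0.
Proof.
move=> sub F0; case: ifP => tV.
  by apply: (sum_sub (G := fun s => F (ext0 Om t s) s) sub) => // s sV; rewrite ext0_outr.
by apply: big1 => j _; rewrite ext0_outl ?tV.
Qed.

Definition lift d (v : 'rV[R]_d) : 'rV[R]_(d + 1) := row_mx v 1.
Arguments lift {d}.

Lemma liftE d (v : 'rV[R]_d) (c : 'cV[R]_(d + 1)) :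
  (lift v *m c) 0 0 = (v *m usubmx c) 0 0 + dsubmx c 0 0.
Proof. by rewrite /lift -{1}(vsubmxK c) mul_row_col mul1mx mxE. Qed.


Lemma ext0_nonedge (V : {set T}) d (E : {set {set T}}) (p : T -> 'rV[R]_d)
  (Om : vtx V -> vtx V -> R) t s :
  is_stress E p Om -> t != s -> [set t; s] \notin E -> ext0 Om t s = 0.
Proof.
move=> [_ S2 _ _] ts ne; rewrite /ext0.
case: (insubP (vtx V) t) => [a _ ea|_]; case: (insubP (vtx V) s) => [b _ eb|_] //.
by apply: S2; [rewrite -val_eqE ea eb | rewrite ea eb].
Qed.

Lemma rowsum_gen (M : nmodType) (V W : {set T}) (Om : vtx V -> vtx V -> R)
   (F : R -> T -> M) (t : T) : V \subset W -> (forall s, F 0 s = 0) ->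
  (forall a, \sum_b F (Om a b) (val b) = 0) ->
  \sum_(j : vtx W) F (ext0 Om t (val j)) (val j) = 0.
Proof.
move=> sub F0 H; rewrite rowsum_ext0 //; case: ifP => // tV.
have [a ea] := vtx_ex tV; rewrite ea.
by under eq_bigr do rewrite ext0E; exact: H.
Qed.

Lemma stress_aff (V : {set T}) d (E : {set {set T}}) (p : T -> 'rV[R]_d)
  (Om : vtx V -> vtx V -> R) :
  is_stress E p Om -> forall x, affv (fun i : vtx V => lift (p (val i))) x -> in_ker Om x.
Proof.
move=> [_ _ S3 S4] x [c Hc] i.
under eq_bigr do rewrite Hc liftE.
rewrite (eq_bigr (fun j => Om i j * (p (val j) *m usubmx c) 0 0 + Om i j * dsubmx c 0 0));
  last by move=> j _; rewrite mulrDr.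
rewrite big_split /= -mulr_suml S3 mul0r addr0.
transitivity (((\sum_j Om i j *: p (val j)) *m usubmx c) 0 0); last by rewrite S4 mul0mx mxE.
by rewrite mulmx_suml summxE; apply: eq_bigr => j _; rewrite -scalemxAl [RHS]mxE.
Qed.
Lemma rank_Pm (V : {set T}) d (p : T -> 'rV[R]_d) (f : 'I_d.+1 -> T) :
  (forall k, f k \in V) ->
  row_free (\matrix_(k < d.+1) row_mx (p (f k)) (1 : 'rV[R]_1)) ->
  \rank (Pm (fun i : vtx V => lift (p (val i)))) = d.+1.
Proof.
move=> fV rf.
have QP : (\matrix_(k < d.+1) row_mx (p (f k)) (1 : 'rV[R]_1) <=
           Pm (fun i : vtx V => lift (p (val i))))%MS.
  apply/row_subP => k; have [a ea] := vtx_ex (fV k); rewrite rowK ea.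
  have -> : row_mx (p (val a)) (1 : 'rV[R]_1) = row (enum_rank a) (Pm (fun i : vtx V => lift (p (val i)))).
    by rewrite rowK enum_rankK.
  exact: row_sub.
apply/eqP; rewrite eqn_leq (leq_trans (rank_leq_col _)) ?addn1 //.
by move: rf; rewrite /row_free => /eqP {1}<-; exact: mxrankS.
Qed.

Definition extf (V : {set T}) (x : vtx V -> R) (t : T) : R :=
  if @insub T (fun y => y \in V) (vtx V) t is Some i then x i else 0.

Lemma extfE (V : {set T}) (x : vtx V -> R) i : extf x (val i) = x i.
Proof. by rewrite /extf valK. Qed.
End TL.

Theorem theorem6 (R : realType) (d : nat) (T : finType)
    (VA VB : {set T}) (EA EB : {set {set T}}) (pA pB : T -> 'rV[R]_d)
    (OmA : vtx VA -> vtx VA -> R) (OmB : vtx VB -> vtx VB -> R) :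
  (1 <= d)%N ->
  general_position VA pA ->
  general_position VB pB ->
  VA :&: VB \proper VA ->
  VA :&: VB \proper VB ->
  (d.+1 <= #|VA :&: VB|)%N ->
  (forall i, i \in VA :&: VB -> pA i = pB i) ->
  is_stress EA pA OmA -> psd OmA -> nullity OmA = d.+1 ->
  is_stress EB pB OmB -> psd OmB -> nullity OmB = d.+1 ->
  let p := fun i => if i \in VA then pA i else pB i in
  let Om := fun i j : vtx (VA :|: VB) =>
              ext0 OmA (val i) (val j) + ext0 OmB (val i) (val j) in
  [/\ @is_stress R d T (VA :|: VB) (EA :|: EB) p Om, psd Om & nullity Om = d.+1].
Proof.
move=> d1 gA gB pA_ pB_ hC eqC sA psA nA sB psB nB p Om.
have subA : VA \subset VA :|: VB := subsetUl _ _.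
have subB : VB \subset VA :|: VB := subsetUr _ _.
have [sA1 sA2 sA3 sA4] := sA.
have [sB1 sB2 sB3 sB4] := sB.
have pAE : forall t, t \in VA -> p t = pA t by move=> t tA; rewrite /p tA.
have pBE : forall t, t \in VB -> p t = pB t.
  by move=> t tB; rewrite /p; case: ifP => tA //; apply: eqC; rewrite inE tA tB.
have St : is_stress (EA :|: EB) p Om.
  split.
  - move=> i j; rewrite /Om [ext0 OmA _ _]ext0_sym // [ext0 OmB _ _]ext0_sym //.
  - move=> i j ij; rewrite in_setU negb_or => /andP[nEA nEB].
    have ij' : val i != val j by rewrite val_eqE.
    by rewrite /Om (ext0_nonedge sA ij' nEA) (ext0_nonedge sB ij' nEB) addr0.
  - move=> i; rewrite /Om big_split /=.
    rewrite (rowsum_gen (F := fun w _ => w) (val i) subA) //.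
    by rewrite (rowsum_gen (F := fun w _ => w) (val i) subB) ?addr0.
  - move=> i; rewrite /Om.
    under eq_bigr do rewrite scalerDl.
    rewrite big_split /=.
    rewrite (rowsum_gen (F := fun w s => w *: p s) (val i) subA) => [||a]; first last.
    + by under eq_bigr => b _ do rewrite (pAE _ (valP b)); exact: sA4.
    + by move=> s; rewrite scale0r.
    rewrite (rowsum_gen (F := fun w s => w *: p s) (val i) subB) => [||a]; first last.
    + by under eq_bigr => b _ do rewrite (pBE _ (valP b)); exact: sB4.
    + by move=> s; rewrite scale0r.
    by rewrite addr0.
have bilE : forall x : vtx (VA :|: VB) -> R, bil Om x x =
    bil OmA (fun a => extf x (val a)) (fun a => extf x (val a)) +
    bil OmB (fun a => extf x (val a)) (fun a => extf x (val a)).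
  move=> x; rewrite /bil -(bil_ext0 OmA (extf x) subA) -(bil_ext0 OmB (extf x) subB).
  rewrite -big_split; apply: eq_bigr => i _; rewrite -big_split; apply: eq_bigr => j _.
  by rewrite !extfE /Om /= mulrDr mulrDl.
split => //.
  by move=> x; rewrite -[X in _ <= X]/(bil Om x x) bilE; apply: addr_ge0; [exact: psA|exact: psB].
pose f (k : 'I_d.+1) : T := enum_val (A := VA :&: VB) (widen_ord hC k).
have finj : injective f.
  move=> k1 k2 /enum_val_inj /(congr1 val) /= e; exact: val_inj.
have fC : forall k, f k \in VA :&: VB by move=> k; exact: enum_valP.
have fA : forall k, f k \in VA by move=> k; have := fC k; rewrite inE => /andP[].
have fB : forall k, f k \in VB by move=> k; have := fC k; rewrite inE => /andP[].
have gAf := gA f finj fA.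
have rkA := rank_Pm fA gAf.
have rkB := rank_Pm fB (gB f finj fB).
apply: (nullity_char (q := fun i : vtx (VA :|: VB) => lift (p (val i)))); last first.
  apply: (rank_Pm (f := f)) => [k|]; first by rewrite in_setU fA.
  have -> : \matrix_(k < d.+1) row_mx (p (f k)) (1 : 'rV[R]_1) =
            \matrix_(k < d.+1) row_mx (pA (f k)) (1 : 'rV[R]_1).
    by apply/row_matrixP => k; rewrite !rowK pAE.
  exact: gAf.
move=> x; split; last by move=> H; apply: (stress_aff St H).
move=> kx; have := ker_bil kx; rewrite bilE => e.
have hA : 0 <= bil OmA (fun a => extf x (val a)) (fun a => extf x (val a)) := psA _.
have hB : 0 <= bil OmB (fun a => extf x (val a)) (fun a => extf x (val a)) := psB _.
have zA : bil OmA (fun a => extf x (val a)) (fun a => extf x (val a)) = 0 by lra.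
have zB : bil OmB (fun a => extf x (val a)) (fun a => extf x (val a)) = 0 by lra.
have [cA HA] := ker_char (stress_aff sA) rkA nA (psd_ker sA1 psA zA).
have [cB HB] := ker_char (stress_aff sB) rkB nB (psd_ker sB1 psB zB).
have eqc : cA = cB.
  pose Q := \matrix_(k < d.+1) row_mx (pA (f k)) (1 : 'rV[R]_1).
  have rowk : forall (c : 'cV[R]_(d + 1)) (k : 'I_d.+1), (Q *m c) k 0 = (lift (pA (f k)) *m c) 0 0.
    by move=> c k; rewrite !mxE; apply: eq_bigr => l _; rewrite /Q mxE.
  have QA' : Q *m cA = Q *m cB.
    apply/colP => k; rewrite !rowk.
    have [a ea] := vtx_ex (fA k); have [b eb] := vtx_ex (fB k).
    have := HA a; have := HB b; rewrite /= -ea -eb eqC // => <- <-.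
    by [].
  have QA : Q *m (cA - cB) = 0 by rewrite mulmxBr QA' subrr.
  have rfQ : row_full Q by move: gAf; rewrite /row_free /row_full => /eqP ->; rewrite addn1.
  have [B BQ] := row_fullP rfQ.
  have : B *m (Q *m (cA - cB)) = 0 by rewrite QA mulmx0.
  by rewrite mulmxA BQ mul1mx => /eqP; rewrite subr_eq0 => /eqP.
exists cA => i; rewrite -(extfE x i).
have [iA|iNA] := boolP (val i \in VA).
  have [a ea] := vtx_ex iA; rewrite ea pAE ?(valP a) //; exact: HA.
have iB : val i \in VB by move: (valP i); rewrite in_setU (negbTE iNA).
have [b eb] := vtx_ex iB; rewrite eb pBE ?(valP b) // eqc; exact: HB.
Qed.
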